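(* Work on $\mathbb R^5$ with coordinates $x_1,\dots,x_5$ and the objects defined in the context. For $\mathbf w\in\{\mathbf u,\mathbf v\}$ the following two sets of formal vector fields are equal: $\{F_1\,\partial\,\mathbf w+F_2\,(b,\mathbf w)^{(1)}+F_3\,(a,\mathbf w)^{(1)}: F_1,F_2\in\mathcal R[[a,b]],\ F_3\in\mathcal R[[a]]\}$ and $\{G_1\,(b,\mathbf w)^{(1)}+G_2\,(a,\mathbf w)^{(1)}: G_1,G_2\in\mathcal R[[a,b]]\}$.
   Context: Let $N=\mathrm{diag}(N_2,N_3)$ be the $5\times5$ nilpotent matrix in upper Jordan form with blocks of sizes 2 and 3, $M=\mathrm{diag}(M_2,M_3)$ with $M_2=\begin{pmatrix}0&0\\1&0\end{pmatrix}$, $M_3=\begin{pmatrix}0&0&0\\2&0&0\\0&2&0\end{pmatrix}$, and $H=\mathrm{diag}(1,-1,2,0,-2)$. With $\mathcal D_Af(\mathbf x)=f'(\mathbf x)A\mathbf x$, put $\mathcal Y=\mathcal D_{M^*}=x_2\partial_{x_1}+2x_4\partial_{x_3}+2x_5\partial_{x_4}$. Invariants (elements of $\ker\mathcal D_{N^*}$, weights w.r.t. $\mathcal D_H$): $a=x_1$ (weight 1), $b=x_3$ (weight 2), $c=x_4^2-2x_3x_5$ (weight 0), $\partial=(a,b)^{(1)}=\widehat a\,a\,\mathcal Yb-\widehat b(\mathcal Ya)b=2x_1x_4-2x_2x_3$ (weight 1), $e=(a^2,b)^{(2)}=8x_1^2x_5-8x_1x_2x_4+4x_2^2x_3$ (weight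 0). $\mathcal R=\mathbb R[[c,e]]$, and $\mathcal R[[a,b]]$ (resp. $\mathcal R[[a]]$) denotes the set of all $F(a,b,c,e)$ (resp. $F(a,c,e)$) for formal power series $F$. Let $\mathbf u=\mathbf e_2$ (weight 1) and $\mathbf v=\mathbf e_5$ (weight 2), standard basis vectors. For an invariant $f$ of weight $\widehat f\ge1$ and $\mathbf w\in\{\mathbf u,\mathbf v\}$ of weight $\widehat{\mathbf w}$, $(f,\mathbf w)^{(1)}=-\widehat f\,f\,M^*\mathbf w-\widehat{\mathbf w}(\mathcal Yf)\mathbf w$; explicitly $(a,\mathbf u)^{(1)}=-(x_1\mathbf e_1+x_2\mathbf e_2)$, $(b,\mathbf u)^{(1)}=-(2x_3\mathbf e_1+2x_4\mathbf e_2)$, $(a,\mathbf v)^{(1)}=-(2x_1\mathbf e_4+2x_2\mathbf e_5)$, $(b,\mathbf v)^{(1)}=-(4x_3\mathbf e_4+4x_4\mathbf e_5)$. *)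

(* Defs.v *)
From HB Require Import structures.
From mathcomp Require Import all_boot all_order all_algebra.
From mathcomp Require Import mpoly.
From mathcomp Require Import reals.
Set Implicit Arguments. Unset Strict Implicit. Unset Printing Implicit Defensive.
Import Order.TTheory GRing.Theory Num.Theory.
Local Open Scope ring_scope.

(* Formal power series in n variables over R: coefficient functions on
   monomials (exponent vectors) 'X_{1..n}. *)
Definition series (R : realType) (n : nat) := 'X_{1..n} -> R.

Definition trunc (R : realType) (n d : nat) (F : series R n) : {mpoly R[n]} :=
  \sum_(m : 'X_{1..n < d.+1}) F m *: 'X_[m].

(* Substitution F(g_1,...,g_n) of polynomials g_i in x_1..x_5 WITH ZERO
   CONSTANT TERM into a power series F: the coefficient of x^m only depends
   on the part of F of degree <= |m|. *)
Definition subst (R : realType) (n : nat) (g : n.-tuple {mpoly R[5]})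
  (F : series R n) : series R 5 :=
  fun m => (comp_mpoly g (trunc (mdeg m) F))@_m.

Definition smul (R : realType) (F : series R 5) (p : {mpoly R[5]}) : series R 5 :=
  fun m => (trunc (mdeg m) F * p)@_m.

(* Coordinates: x_{k+1} is 'X_k, k = 0..4. *)
Definition xx (R : realType) (k : nat) : {mpoly R[5]} := 'X_(inord k).

Definition inv_a (R : realType) : {mpoly R[5]} := xx R 0.
Definition inv_b (R : realType) : {mpoly R[5]} := xx R 2.
Definition inv_c (R : realType) : {mpoly R[5]} :=
  xx R 3 ^+ 2 - 2%:R * xx R 2 * xx R 4.
Definition inv_d (R : realType) : {mpoly R[5]} :=
  2%:R * xx R 0 * xx R 3 - 2%:R * xx R 1 * xx R 2.
Definition inv_e (R : realType) : {mpoly R[5]} :=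
  8%:R * xx R 0 ^+ 2 * xx R 4 - 8%:R * xx R 0 * xx R 1 * xx R 3
  + 4%:R * xx R 1 ^+ 2 * xx R 2.

Definition abce (R : realType) : 4.-tuple {mpoly R[5]} :=
  [tuple inv_a R; inv_b R; inv_c R; inv_e R].
Definition ace (R : realType) : 3.-tuple {mpoly R[5]} :=
  [tuple inv_a R; inv_c R; inv_e R].

(* The two vectors u = e_2, v = e_5. *)
Inductive wvec := wU | wV.

Definition widx (w : wvec) : nat := if w is wU then 1%N else 4%N.

(* Polynomial vector fields: component i (0-based, i.e. coefficient of e_{i+1}). *)
Definition pvf (R : realType) := 'I_5 -> {mpoly R[5]}.

Definition d_w (R : realType) (w : wvec) : pvf R :=
  fun i => if (i : nat) == widx w then inv_d R else 0.

Definition a_w (R : realType) (w : wvec) : pvf R :=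
  fun i => match w with
  | wU => nth 0 [:: - xx R 0; - xx R 1; 0; 0; 0] i
  | wV => nth 0 [:: 0; 0; 0; - (2%:R * xx R 0); - (2%:R * xx R 1)] i
  end.

Definition b_w (R : realType) (w : wvec) : pvf R :=
  fun i => match w with
  | wU => nth 0 [:: - (2%:R * xx R 2); - (2%:R * xx R 3); 0; 0; 0] i
  | wV => nth 0 [:: 0; 0; 0; - (4%:R * xx R 2); - (4%:R * xx R 3)] i
  end.

Definition fvf (R : realType) := 'I_5 -> series R 5.

Definition vfset_first (R : realType) (w : wvec) (X : fvf R) : Prop :=
  exists (F1 F2 : series R 4) (F3 : series R 3),
    forall (i : 'I_5) (m : 'X_{1..5}),
      X i m = smul (subst (abce R) F1) (d_w R w i) m
            + smul (subst (abce R) F2) (b_w R w i) m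
            + smul (subst (ace R) F3) (a_w R w i) m.

Definition vfset_second (R : realType) (w : wvec) (X : fvf R) : Prop :=
  exists (G1 G2 : series R 4),
    forall (i : 'I_5) (m : 'X_{1..5}),
      X i m = smul (subst (abce R) G1) (b_w R w i) m
            + smul (subst (abce R) G2) (a_w R w i) m.

(* Main.v *)
Require Import Defs.
From HB Require Import structures.
From mathcomp Require Import all_boot all_order all_algebra.
From mathcomp Require Import mpoly.
From mathcomp Require Import reals.
From mathcomp Require Import ring.
Set Implicit Arguments. Unset Strict Implicit. Unset Printing Implicit Defensive.
Import Order.TTheory GRing.Theory Num.Theory.
Local Open Scope ring_scope.



Section Gen.
Variable R : realType.

Definition lowdeg n k (p : {mpoly R[n]}) :=
  forall m : 'X_{1..n}, (mdeg m < k)%N -> p@_m = 0.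
Definition eqd n d (p q : {mpoly R[n]}) :=
  forall m : 'X_{1..n}, (mdeg m <= d)%N -> p@_m = q@_m.

Lemma lowdeg_mul n a b (p q : {mpoly R[n]}) :
  lowdeg a p -> lowdeg b q -> lowdeg (a + b) (p * q).
Proof.
move=> hp hq m hm; rewrite mcoeffM big1 // => k /eqP hk.
have : (mdeg k.1 + mdeg k.2 < a + b)%N by rewrite -mdegD -hk.
case: (ltnP (mdeg k.1) a) => h1; first by rewrite hp // mul0r.
case: (ltnP (mdeg k.2) b) => h2; first by rewrite hq // mulr0.
by move=> h; have := leq_add h1 h2; rewrite leqNgt h.
Qed.

Lemma lowdegW n a b (p : {mpoly R[n]}) : (b <= a)%N -> lowdeg a p -> lowdeg b p.
Proof. by move=> hba hp m hm; apply: hp; apply: leq_trans hm hba. Qed.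

Lemma lowdeg0 n (p : {mpoly R[n]}) : lowdeg 0 p.
Proof. by []. Qed.

Lemma lowdegD n a (p q : {mpoly R[n]}) : lowdeg a p -> lowdeg a q -> lowdeg a (p + q).
Proof. by move=> hp hq m hm; rewrite mcoeffD hp ?hq ?addr0. Qed.

Lemma lowdegN n a (p : {mpoly R[n]}) : lowdeg a p -> lowdeg a (- p).
Proof. by move=> hp m hm; rewrite mcoeffN hp ?oppr0. Qed.

Lemma lowdegZ n a c (p : {mpoly R[n]}) : lowdeg a p -> lowdeg a (c *: p).
Proof. by move=> hp m hm; rewrite mcoeffZ hp ?mulr0. Qed.

Lemma lowdeg_zero n a : lowdeg a (0 : {mpoly R[n]}).
Proof. by move=> m _; rewrite mcoeff0. Qed.

Lemma lowdegX n (i : 'I_n) : lowdeg 1 'X_i.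
Proof.
move=> m; rewrite ltnS leqn0 mdeg_eq0 => /eqP ->.
by rewrite mcoeffX; case: eqP => // /eqP; rewrite mnm1_eq0.
Qed.

Lemma lowdeg_exp n (p : {mpoly R[n]}) k : lowdeg 1 p -> lowdeg k (p ^+ k).
Proof.
move=> hp; elim: k => [|k ih]; first exact: lowdeg0.
by rewrite exprS -add1n; apply: lowdeg_mul.
Qed.

Lemma lowdeg_comp n k (g : n.-tuple {mpoly R[k]}) a (P : {mpoly R[n]}) :
  (forall i, lowdeg 1 (tnth g i)) -> lowdeg a P -> lowdeg a (P \mPo g).
Proof.
move=> hg hP; rewrite comp_mpolyE big_seq.
apply: (big_ind (lowdeg a)); [exact: lowdeg_zero| exact: lowdegD|].
move=> m hm; apply: lowdegZ.
have ha : (a <= mdeg m)%N.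
  rewrite leqNgt; apply/negP => h; move: hm; rewrite mcoeff_msupp hP //.
  by rewrite eqxx.
apply: lowdegW ha _; rewrite mdegE.
apply: (big_ind2 (fun k p => lowdeg k p)) => //.
- move=> x1 x2 y1 y2 h1 h2; exact: lowdeg_mul.
- by move=> i _; apply: lowdeg_exp.
Qed.

Lemma eqd_lowdeg n d (p q : {mpoly R[n]}) : lowdeg d.+1 (p - q) -> eqd d p q.
Proof. by move=> h m hm; apply/eqP; rewrite -subr_eq0 -mcoeffB h. Qed.

Lemma lowdeg_eqd n d (p q : {mpoly R[n]}) : eqd d p q -> lowdeg d.+1 (p - q).
Proof. by move=> h m hm; rewrite mcoeffB h // subrr. Qed.

Lemma eqd_comp n k (g : n.-tuple {mpoly R[k]}) d (P Q : {mpoly R[n]}) :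
  (forall i, lowdeg 1 (tnth g i)) -> eqd d P Q -> eqd d (P \mPo g) (Q \mPo g).
Proof.
move=> hg h; apply: eqd_lowdeg; rewrite -comp_mpolyB.
by apply: lowdeg_comp => //; apply: lowdeg_eqd.
Qed.

Lemma eqd_mulr n d (P Q r : {mpoly R[n]}) : eqd d P Q -> eqd d (P * r) (Q * r).
Proof.
move=> h m hm; rewrite !mcoeffM; apply: eq_bigr => k hk.
rewrite h //; apply: leq_trans hm.
have e : mdeg (k.1 + k.2)%MM = mdeg m by rewrite -(eqP hk).
by apply: leq_trans (eq_leq e); rewrite mdegD leq_addr.
Qed.

Lemma eqd_mull n d (P Q r : {mpoly R[n]}) : eqd d P Q -> eqd d (r * P) (r * Q).
Proof. by rewrite ![r * _]mulrC; apply: eqd_mulr. Qed.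

Lemma eqd_refl n d (P : {mpoly R[n]}) : eqd d P P. Proof. by []. Qed.
Lemma eqd_sym n d (P Q : {mpoly R[n]}) : eqd d P Q -> eqd d Q P.
Proof. by move=> h m hm; rewrite h. Qed.
Lemma eqd_trans n d (P Q S : {mpoly R[n]}) : eqd d P Q -> eqd d Q S -> eqd d P S.
Proof. by move=> h1 h2 m hm; rewrite h1 ?h2. Qed.
Lemma eqdD n d (P Q P' Q' : {mpoly R[n]}) : eqd d P Q -> eqd d P' Q' -> eqd d (P + P') (Q + Q').
Proof. by move=> h1 h2 m hm; rewrite !mcoeffD h1 ?h2. Qed.
Lemma eqdN n d (P Q : {mpoly R[n]}) : eqd d P Q -> eqd d (- P) (- Q).
Proof. by move=> h1 m hm; rewrite !mcoeffN h1. Qed.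
Lemma eqdB n d (P Q P' Q' : {mpoly R[n]}) : eqd d P Q -> eqd d P' Q' -> eqd d (P - P') (Q - Q').
Proof. by move=> h1 h2; apply: eqdD => //; apply: eqdN. Qed.
Lemma eqdZ n d c (P Q : {mpoly R[n]}) : eqd d P Q -> eqd d (c *: P) (c *: Q).
Proof. by move=> h1 m hm; rewrite !mcoeffZ h1. Qed.
Lemma eqdW n d d' (P Q : {mpoly R[n]}) : (d' <= d)%N -> eqd d P Q -> eqd d' P Q.
Proof. by move=> hd h m hm; rewrite h // (leq_trans hm). Qed.

Lemma mcoeff_trunc n d (F : series R n) m :
  (trunc d F)@_m = if (mdeg m <= d)%N then F m else 0.
Proof.
rewrite /trunc raddf_sum /=.
under eq_bigr => m' _ do rewrite mcoeffZ mcoeffX.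
case: ifP => hm.
  have hb : (mdeg m < d.+1)%N by [].
  rewrite (bigD1 (BMultinom hb)) //= eqxx mulr1 big1 ?addr0 // => m' hm'.
  case: eqP => [h|]; last by rewrite mulr0.
  by move: hm'; rewrite bmeqP /= h eqxx.
rewrite big1 // => m' _; case: eqP => [h|]; last by rewrite mulr0.
by move: (bmdeg m'); rewrite h ltnS hm.
Qed.

Lemma eqd_trunc n d d' (F : series R n) : (d <= d')%N -> eqd d (trunc d F) (trunc d' F).
Proof.
move=> hd m hm; rewrite !mcoeff_trunc hm.
by rewrite (leq_trans hm hd).
Qed.

Definition ser n (fam : nat -> {mpoly R[n]}) : series R n := fun m => (fam (mdeg m))@_m.

Lemma trunc_ser n (fam : nat -> {mpoly R[n]}) d :
  (forall d1 d2, (d1 <= d2)%N -> eqd d1 (fam d1) (fam d2)) ->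
  eqd d (trunc d (ser fam)) (fam d).
Proof.
by move=> hf m hm; rewrite mcoeff_trunc hm /ser (hf _ _ hm).
Qed.

Lemma subst_ser n (g : n.-tuple {mpoly R[5]}) F :
  subst g F = ser (fun d => trunc d F \mPo g).
Proof. by []. Qed.

Lemma trunc_subst n (g : n.-tuple {mpoly R[5]}) F d :
  (forall i, lowdeg 1 (tnth g i)) ->
  eqd d (trunc d (subst g F)) (trunc d F \mPo g).
Proof.
move=> hg; rewrite subst_ser; apply: trunc_ser => d1 d2 h.
by apply: eqd_comp => //; apply: eqd_trunc.
Qed.

Lemma smul_subst n (g : n.-tuple {mpoly R[5]}) F p m :
  (forall i, lowdeg 1 (tnth g i)) ->
  smul (subst g F) p m = ((trunc (mdeg m) F \mPo g) * p)@_m.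
Proof.
move=> hg; rewrite /smul.
by apply: eqd_mulr; [apply: trunc_subst|].
Qed.

End Gen.



Section Spec.
Variable R : realType.

Lemma comp_comp n k l (g : n.-tuple {mpoly R[k]}) (h : k.-tuple {mpoly R[l]}) P :
  (P \mPo g) \mPo h = P \mPo [tuple (tnth g i) \mPo h | i < n].
Proof.
rewrite (comp_mpolyEX P g) (comp_mpolyEX P [tuple (tnth g i) \mPo h | i < n]).
rewrite (big_morph (comp_mpoly h) (comp_mpolyD h) (comp_mpoly0 h)); apply: eq_bigr => m _.
rewrite -!mul_mpolyC rmorphM /= comp_mpolyC; congr (_ * _).
rewrite !comp_mpolyX rmorph_prod /=; apply: eq_bigr => i _.
by rewrite rmorphXn /= tnth_mktuple.
Qed.

Lemma mcoeff_MXk n (k : 'I_n) (P : {mpoly R[n]}) m :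
  ('X_k * P)@_m = if m k == 0%N then 0 else P@_(m - U_(k))%MM.
Proof.
case: eqP => hk.
  rewrite mcoeffM big1 // => kk /eqP hkk.
  rewrite mcoeffX; case: eqP => [h|]; last by rewrite mul0r.
  have := congr1 (fun mm : 'X_{1..n} => mm k) hkk.
  by rewrite /= mnmDE -h mnm1E eqxx hk.
have hle : (U_(k) <= m)%MM by rewrite lep1mP; apply/eqP.
by rewrite -{1}(submK hle) mulrC addmC mcoeffMX.
Qed.

Definition i40 : 'I_4 := @Ordinal 4 0 isT.
Definition i41 : 'I_4 := @Ordinal 4 1 isT.
Definition i42 : 'I_4 := @Ordinal 4 2 isT.
Definition i43 : 'I_4 := @Ordinal 4 3 isT.
Definition i30 : 'I_3 := @Ordinal 3 0 isT.
Definition i31 : 'I_3 := @Ordinal 3 1 isT.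
Definition i32 : 'I_3 := @Ordinal 3 2 isT.

Definition sel : 3.-tuple {mpoly R[4]} := [tuple 'X_i40; 'X_i42; 'X_i43].
Definition proj : 4.-tuple {mpoly R[3]} := [tuple 'X_i30; 0; 'X_i31; 'X_i32].
Definition zb : 4.-tuple {mpoly R[4]} := [tuple 'X_i40; 0; 'X_i42; 'X_i43].
Definition zimg : 4.-tuple {mpoly R[5]} := [tuple inv_a R; 0; inv_c R; inv_e R].

Lemma sel_abce : [tuple (tnth sel i) \mPo abce R | i < 3] = ace R.
Proof.
apply: eq_from_tnth => i; rewrite tnth_mktuple.
by case: i => -[|[|[|//]]] hi; rewrite /tnth /= comp_mpolyXU.
Qed.

Lemma proj_ace : [tuple (tnth proj i) \mPo ace R | i < 4] = zimg.
Proof.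
apply: eq_from_tnth => i; rewrite tnth_mktuple.
by case: i => -[|[|[|[|//]]]] hi; rewrite /tnth /= ?comp_mpolyXU ?comp_mpoly0.
Qed.

Lemma zb_abce : [tuple (tnth zb i) \mPo abce R | i < 4] = zimg.
Proof.
apply: eq_from_tnth => i; rewrite tnth_mktuple.
by case: i => -[|[|[|[|//]]]] hi; rewrite /tnth /= ?comp_mpolyXU ?comp_mpoly0.
Qed.

Lemma zb_fix (P : {mpoly R[4]}) :
  (forall m : 'X_{1..4}, m i41 != 0%N -> P@_m = 0) -> P \mPo zb = P.
Proof.
move=> hP; rewrite comp_mpolyEX [RHS]mpolyE big_seq [RHS]big_seq.
apply: eq_bigr => m hm; congr (_ *: _).
have h1 : m i41 = 0%N.
  apply/eqP; apply/negPn/negP => h; move: hm; rewrite mcoeff_msupp hP //.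
  by rewrite eqxx.
rewrite comp_mpolyX [RHS]mpolyXE_id; apply: eq_bigr => i _.
case: i => -[|[|[|[|//]]]] hi; rewrite /tnth /=; try by congr (_ ^+ _); apply: val_inj.
have -> : Ordinal hi = i41 by apply: val_inj.
by rewrite h1 !expr0.
Qed.

Lemma lowdeg_mulr1 n (p q : {mpoly R[n]}) : lowdeg 1 q -> lowdeg 1 (p * q).
Proof. by move=> h; have := lowdeg_mul (lowdeg0 p) h. Qed.
Lemma lowdeg_mull1 n (p q : {mpoly R[n]}) : lowdeg 1 p -> lowdeg 1 (p * q).
Proof. by move=> h; rewrite mulrC; apply: lowdeg_mulr1. Qed.

Lemma lowdeg_xx k : lowdeg 1 (xx R k).
Proof. exact: lowdegX. Qed.

Ltac ld := repeat first
  [ apply: lowdegD | apply: lowdegN | apply: lowdeg_zero | apply: lowdeg_xx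
  | apply: lowdegX | (apply: lowdeg_mulr1; ld) | apply: lowdeg_mull1 ].

Lemma lowdeg_a : lowdeg 1 (inv_a R). Proof. exact: lowdeg_xx. Qed.
Lemma lowdeg_b : lowdeg 1 (inv_b R). Proof. exact: lowdeg_xx. Qed.
Lemma lowdeg_c : lowdeg 1 (inv_c R).
Proof. rewrite /inv_c expr2; ld. Qed.
Lemma lowdeg_e : lowdeg 1 (inv_e R).
Proof. rewrite /inv_e expr2 expr2; ld. Qed.

Lemma ld_abce i : lowdeg 1 (tnth (abce R) i).
Proof.
case: i => -[|[|[|[|//]]]] hi; rewrite /tnth /=;
  auto using lowdeg_a, lowdeg_b, lowdeg_c, lowdeg_e.
Qed.
Lemma ld_ace i : lowdeg 1 (tnth (ace R) i).
Proof.
case: i => -[|[|[|//]]] hi; rewrite /tnth /=; auto using lowdeg_a, lowdeg_c, lowdeg_e.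
Qed.
Lemma ld_sel i : lowdeg 1 (tnth sel i).
Proof. case: i => -[|[|[|//]]] hi; rewrite /tnth /=; exact: lowdegX. Qed.
Lemma ld_proj i : lowdeg 1 (tnth proj i).
Proof.
case: i => -[|[|[|[|//]]]] hi; rewrite /tnth /=; auto using lowdegX, lowdeg_zero.
Qed.

End Spec.



Section Ident.
Variable R : realType.

Definition alpha (w : wvec) : R := if w is wU then 1 else 2^-1.
Definition beta (w : wvec) : R := if w is wU then 2%:R else 1.
Definition gam (w : wvec) : R := if w is wU then 2^-1 else 1.
Definition del (w : wvec) : R := 2^-1.

Lemma half_mp : (2^-1 : R)%:MP * 2%:R = 1 :> {mpoly R[5]}.
Proof.
have e : (2%:R : R)%:MP = 2%:R :> {mpoly R[5]} by rewrite rmorph_nat.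
by rewrite -e -rmorphM mulVf ?pnatr_eq0 // rmorph1.
Qed.

Lemma mpC2 : (2%:R : R)%:MP = 2%:R :> {mpoly R[5]}.
Proof. by rewrite rmorph_nat. Qed.
Lemma mpC1 : (1 : R)%:MP = 1 :> {mpoly R[5]}.
Proof. by rewrite rmorph1. Qed.

Ltac lc C h t := apply/eqP; rewrite -subr_eq0; apply/eqP;
  transitivity (C * (t * 2%:R - 1)); [ring | by rewrite h subrr mulr0].

Lemma keyK w (i : 'I_5) :
  d_w R w i = - (alpha w *: (inv_a R * b_w R w i)) + beta w *: (inv_b R * a_w R w i).
Proof.
case: w; rewrite /alpha /beta -!mul_mpolyC ?mpC1 ?mpC2;
have h := half_mp;
move: h; generalize ((2^-1 : R)%:MP : {mpoly R[5]}) => t h;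
case: i => -[|[|[|[|[|//]]]]] hi; rewrite /d_w /a_w /b_w /= /inv_d /inv_a /inv_b; try ring.
- lc (xx R 0 * xx R 2 * (-2%:R)) h t.
- lc (xx R 0 * xx R 3 * (-2%:R)) h t.
Qed.

Lemma keyK' w (i : 'I_5) :
  inv_b R * a_w R w i = gam w *: d_w R w i + del w *: (inv_a R * b_w R w i).
Proof.
case: w; rewrite /gam /del -!mul_mpolyC ?mpC1 ?mpC2;
have h := half_mp;
move: h; generalize ((2^-1 : R)%:MP : {mpoly R[5]}) => t h;
case: i => -[|[|[|[|[|//]]]]] hi; rewrite /d_w /a_w /b_w /= /inv_d /inv_a /inv_b; try ring.
- lc (xx R 0 * xx R 2) h t.
- lc (xx R 1 * xx R 2) h t.
- lc (xx R 0 * xx R 2 * 2%:R) h t.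
- lc (xx R 0 * xx R 3 * 2%:R) h t.
Qed.

End Ident.



Lemma forward (R : realType) (w : wvec) (X : fvf R) :
  vfset_first w X -> vfset_second w X.
Proof.
case=> F1 [F2 [F3 hX]].
pose G1 := ser (fun d => trunc d F2 - alpha R w *: ('X_i40 * trunc d F1)).
pose G2 := ser (fun d => (trunc d F3 \mPo sel R) + beta R w *: ('X_i41 * trunc d F1)).
exists G1, G2 => i m.
rewrite hX !(smul_subst _ _ _ (@ld_abce R)) (smul_subst _ _ _ (@ld_ace R)).
set d := mdeg m.
rewrite -!mcoeffD.
suff : eqd d ((trunc d F1 \mPo abce R) * d_w R w i + (trunc d F2 \mPo abce R) * b_w R w i +
  (trunc d F3 \mPo ace R) * a_w R w i)
  ((trunc d G1 \mPo abce R) * b_w R w i + (trunc d G2 \mPo abce R) * a_w R w i).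
  by apply.
have e1 : eqd d (trunc d G1 \mPo abce R)
   ((trunc d F2 \mPo abce R) - alpha R w *: (inv_a R * (trunc d F1 \mPo abce R))).
  apply: eqd_trans.
    apply: eqd_comp; first exact: ld_abce.
    apply: trunc_ser => d1 d2 h12; apply: eqdB; first exact: eqd_trunc.
    by apply: eqdZ; apply: eqd_mull; apply: eqd_trunc.
  by rewrite comp_mpolyB comp_mpolyZ rmorphM /= comp_mpolyXU.
have e2 : eqd d (trunc d G2 \mPo abce R)
   ((trunc d F3 \mPo ace R) + beta R w *: (inv_b R * (trunc d F1 \mPo abce R))).
  apply: eqd_trans.
    apply: eqd_comp; first exact: ld_abce.
    apply: trunc_ser => d1 d2 h12; apply: eqdD.
      by apply: eqd_comp; [exact: ld_sel | exact: eqd_trunc].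
    by apply: eqdZ; apply: eqd_mull; apply: eqd_trunc.
  by rewrite comp_mpolyD comp_mpolyZ rmorphM /= comp_mpolyXU comp_comp sel_abce.
apply: eqd_sym; apply: eqd_trans.
  by apply: eqdD; apply: eqd_mulr; [exact: e1 | exact: e2].
rewrite keyK -!mul_mpolyC.
move: (trunc d F1 \mPo abce R) (trunc d F2 \mPo abce R) (trunc d F3 \mPo ace R) => A1 A2 A3.
move=> mm _; congr mcoeff; ring.
Qed.

Lemma backward (R : realType) (w : wvec) (X : fvf R) :
  vfset_second w X -> vfset_first w X.
Proof.
case=> G1 [G2 hX].
pose Z : series R 4 := fun m => if m i41 == 0%N then G2 m else 0.
pose H : series R 4 := fun m => G2 (m + U_(i41))%MM.
have hsplit : forall d, eqd d (trunc d G2) (trunc d Z + 'X_i41 * trunc d H).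
  move=> d m hm; rewrite mcoeffD mcoeff_MXk !mcoeff_trunc hm /Z.
  case: eqP => h0; first by rewrite addr0.
  rewrite add0r (leq_trans (mdegB _ _) hm) /H submK //.
  by rewrite lep1mP; apply/eqP.
pose F1 := ser (fun d => gam R w *: trunc d H).
pose F2 := ser (fun d => trunc d G1 + del R w *: ('X_i40 * trunc d H)).
pose F3 := ser (fun d => trunc d Z \mPo proj R).
exists F1, F2, F3 => i m.
rewrite hX !(smul_subst _ _ _ (@ld_abce R)) (smul_subst _ _ _ (@ld_ace R)).
set d := mdeg m.
rewrite -!mcoeffD.
suff : eqd d ((trunc d G1 \mPo abce R) * b_w R w i + (trunc d G2 \mPo abce R) * a_w R w i)
  ((trunc d F1 \mPo abce R) * d_w R w i + (trunc d F2 \mPo abce R) * b_w R w i +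
  (trunc d F3 \mPo ace R) * a_w R w i).
  by apply.
have e1 : eqd d (trunc d F1 \mPo abce R) (gam R w *: (trunc d H \mPo abce R)).
  apply: eqd_trans.
    apply: eqd_comp; first exact: ld_abce.
    apply: trunc_ser => d1 d2 h12.
    by apply: eqdZ; apply: eqd_trunc.
  by rewrite comp_mpolyZ.
have e2 : eqd d (trunc d F2 \mPo abce R)
   ((trunc d G1 \mPo abce R) + del R w *: (inv_a R * (trunc d H \mPo abce R))).
  apply: eqd_trans.
    apply: eqd_comp; first exact: ld_abce.
    apply: trunc_ser => d1 d2 h12; apply: eqdD; first exact: eqd_trunc.
    by apply: eqdZ; apply: eqd_mull; apply: eqd_trunc.
  by rewrite comp_mpolyD comp_mpolyZ rmorphM /= comp_mpolyXU.
have e3 : eqd d (trunc d F3 \mPo ace R) (trunc d Z \mPo abce R).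
  apply: eqd_trans.
    apply: eqd_comp; first exact: ld_ace.
    apply: trunc_ser => d1 d2 h12.
    by apply: eqd_comp; [exact: ld_proj | exact: eqd_trunc].
  rewrite comp_comp proj_ace -(zb_abce R) -comp_comp zb_fix //.
  move=> mm hmm; rewrite mcoeff_trunc /Z.
  by rewrite (negbTE hmm); case: ifP.
have e4 : eqd d (trunc d G2 \mPo abce R)
   ((trunc d Z \mPo abce R) + inv_b R * (trunc d H \mPo abce R)).
  apply: eqd_trans.
    by apply: eqd_comp; [exact: ld_abce | exact: hsplit].
  by rewrite comp_mpolyD rmorphM /= comp_mpolyXU.
apply: eqd_trans.
  by apply: eqdD; apply: eqd_mulr; [apply: eqd_refl | exact: e4].
apply: eqd_sym; apply: eqd_trans.
  apply: eqdD; first apply: eqdD.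
  - by apply: eqd_mulr; exact: e1.
  - by apply: eqd_mulr; exact: e2.
  - by apply: eqd_mulr; exact: e3.
have k := keyK' R w i.
rewrite -!mul_mpolyC in k *.
move: k (trunc d H \mPo abce R) (trunc d G1 \mPo abce R) (trunc d Z \mPo abce R) => k AH A1 AZ.
have -> : (AZ + inv_b R * AH) * a_w R w i = AZ * a_w R w i + AH * (inv_b R * a_w R w i) by ring.
rewrite k => mm _; congr mcoeff; ring.
Qed.

Theorem lemma17p12 (R : realType) (w : wvec) (X : fvf R) :
  vfset_first w X <-> vfset_second w X.
Proof. by split; [apply: forward | apply: backward]. Qed.
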